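(* Let $\sigma>0$ and $V,\gamma,\varepsilon>0$ satisfy $\sqrt{\frac{1+\sigma}{\sigma}}<\frac{V+\gamma\varepsilon}{\sqrt\sigma}<\zeta_\sigma$. Let $n_s:=\frac{V+\gamma\varepsilon}{\sqrt\sigma}$ and \[ g(n):=\frac{(V+\gamma\varepsilon)^2}{n}+\sigma n+e^{H(n)},\qquad H(n):=\frac{(V+\gamma\varepsilon)^2}{2}\Big(1-\frac1{n^2}\Big)-\sigma\ln n\quad(n>0). \] Then $g(1)>g(n_s)$.
   Context: $\zeta_\sigma$ denotes the unique root $z>1$ of $z^{\sigma}[\sigma(z-1)^2+1]=\exp(\tfrac{\sigma}{2}(z^2-1))$ on $(1,\infty)$. *)

(* Defs.v *)
From Stdlib Require Import Reals.
Open Scope R_scope.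

Definition zeta_eq (sigma z : R) : Prop :=
  Rpower z sigma * (sigma * (z - 1) ^ 2 + 1) = exp (sigma / 2 * (z ^ 2 - 1)).

Definition is_zeta (sigma zeta : R) : Prop :=
  1 < zeta /\ zeta_eq sigma zeta /\ (forall z, 1 < z -> zeta_eq sigma z -> z = zeta).

(* H(n) and g(n), with a = V + gamma*epsilon *)
Definition Hfun (sigma a n : R) : R :=
  a ^ 2 / 2 * (1 - 1 / n ^ 2) - sigma * ln n.

Definition gfun (sigma a n : R) : R :=
  a ^ 2 / n + sigma * n + exp (Hfun sigma a n).

(* Main.v *)
Require Import Defs.
From Stdlib Require Import Reals Lra Psatz.
From Coquelicot Require Import Coquelicot.
Open Scope R_scope.

Definition FF (s z : R) := s * ln z + ln (s * (z - 1) ^ 2 + 1) - s / 2 * (z ^ 2 - 1).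
Definition FF' (s z : R) := s / z + s * (2 * (z - 1)) / (s * (z - 1) ^ 2 + 1) - s * z.

Lemma FF_der s z : 0 < s -> 0 < z -> derivable_pt_lim (FF s) z (FF' s z).
Proof.
  intros Hs Hz. apply is_derive_Reals. unfold FF, FF'.
  assert (0 < s * (z - 1) ^ 2 + 1) by (pose proof (pow2_ge_0 (z-1)); nra).
  auto_derive.
  - repeat split; try lra; ring_simplify; nra.
  - field; lra.
Qed.

Lemma FF'_neg s z : 0 < s -> 1 < z -> 1 < s * (z^2 - 1) -> FF' s z < 0.
Proof.
  intros Hs Hz Hc. unfold FF'.
  assert (Hp : 0 < s * (z - 1) ^ 2 + 1) by (pose proof (pow2_ge_0 (z-1)); nra).
  assert (E : FF' s z = s * (z-1)^2 * (1 - s * (z^2 - 1)) / (z * (s * (z - 1) ^ 2 + 1))).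
  { unfold FF'; field; lra. }
  unfold FF' in E; rewrite E.
  apply Rdiv_neg_pos.
  - assert (0 < s * (z-1)^2) by (apply Rmult_lt_0_compat; [lra| apply pow_lt; lra]).
    nra.
  - nra.
Qed.

Theorem lemma2p1 (sigma V gamma eps zeta : R) :
  0 < sigma -> 0 < V -> 0 < gamma -> 0 < eps ->
  is_zeta sigma zeta ->
  sqrt ((1 + sigma) / sigma) < (V + gamma * eps) / sqrt sigma ->
  (V + gamma * eps) / sqrt sigma < zeta ->
  gfun sigma (V + gamma * eps) 1 >
    gfun sigma (V + gamma * eps) ((V + gamma * eps) / sqrt sigma).
Proof.
  intros Hs HV Hg He [Hz1 [Hzeq _]] H1 H2.
  set (a := V + gamma * eps) in *.
  set (n := a / sqrt sigma) in *.
  assert (Ha : 0 < a) by (unfold a; nra).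
  assert (Hsq : 0 < sqrt sigma) by (apply sqrt_lt_R0; lra).
  assert (Hss : sqrt sigma * sqrt sigma = sigma) by (apply sqrt_sqrt; lra).
  assert (Hn0 : 0 < n) by (unfold n; apply Rdiv_lt_0_compat; lra).
  assert (Ha2 : a ^ 2 = sigma * n ^ 2).
  { unfold n. field_simplify; [|lra]. replace (sqrt sigma ^ 2) with sigma by nra. field; lra. }
  assert (Hn2 : 1 < sigma * (n ^ 2 - 1)).
  { assert (Hq : 0 <= (1 + sigma) / sigma) by (apply Rlt_le, Rdiv_lt_0_compat; lra).
    assert (HH : (1 + sigma) / sigma < n * n).
    { rewrite <- (sqrt_sqrt _ Hq).
      assert (0 <= sqrt ((1 + sigma) / sigma)) by apply sqrt_pos. nra. }
    apply (Rmult_lt_compat_l sigma) in HH; [|lra].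
    replace (sigma * ((1 + sigma) / sigma)) with (1 + sigma) in HH by (field; lra).
    nra. }
  assert (Hn1' : 1 < n ^ 2).
  { destruct (Rle_lt_dec (n^2) 1); [|lra].
    assert (sigma * (n^2 - 1) <= 0) by (pose proof (Rmult_le_compat_l sigma (n^2-1) 0 ltac:(lra) ltac:(lra)); lra). lra. }
  assert (Hn1 : 1 < n) by (simpl in Hn1'; nra).
  assert (Fz : FF sigma zeta = 0).
  { unfold zeta_eq, Rpower in Hzeq. unfold FF.
    assert (Hp : 0 < sigma * (zeta - 1) ^ 2 + 1) by (pose proof (pow2_ge_0 (zeta-1)); nra).
    apply (f_equal ln) in Hzeq.
    rewrite ln_mult in Hzeq; [|apply exp_pos|lra].
    rewrite !ln_exp in Hzeq. lra. }
  assert (Fn : 0 < FF sigma n).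
  { destruct (MVT_cor2 (FF sigma) (FF' sigma) n zeta H2) as [c [Hc1 Hc2]].
    { intros c Hc. apply FF_der; lra. }
    assert (FF' sigma c < 0).
    { apply FF'_neg; try lra.
      assert (n ^ 2 < c ^ 2) by (simpl; nra).
      pose proof (Rmult_lt_compat_l sigma (n^2) (c^2) Hs ltac:(lra)). lra. }
    nra. }
  unfold FF in Fn.
  assert (Hp : 0 < sigma * (n - 1) ^ 2 + 1) by (pose proof (pow2_ge_0 (n-1)); nra).
  assert (Hexp : exp (Hfun sigma a n) < sigma * (n - 1) ^ 2 + 1).
  { unfold Hfun. rewrite Ha2.
    replace (sigma * n ^ 2 / 2 * (1 - 1 / n ^ 2) - sigma * ln n)
      with (ln (sigma * (n - 1) ^ 2 + 1) + - (sigma * ln n + ln (sigma * (n - 1) ^ 2 + 1) - sigma / 2 * (n ^ 2 - 1)))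
      by (field; lra).
    rewrite exp_plus, exp_Ropp, exp_ln by lra.
    assert (1 < exp (sigma * ln n + ln (sigma * (n - 1) ^ 2 + 1) - sigma / 2 * (n ^ 2 - 1))).
    { pose proof (exp_increasing 0 (sigma * ln n + ln (sigma * (n - 1) ^ 2 + 1) - sigma / 2 * (n ^ 2 - 1)) ltac:(lra)) as HE.
      rewrite exp_0 in HE. exact HE. }
    apply Rmult_lt_reg_r with (exp (sigma * ln n + ln (sigma * (n - 1) ^ 2 + 1) - sigma / 2 * (n ^ 2 - 1))).
    { apply exp_pos. }
    rewrite Rmult_assoc, Rinv_l by (apply Rgt_not_eq, exp_pos). nra. }
  unfold gfun. unfold Hfun at 1.
  replace (a ^ 2 / 2 * (1 - 1 / 1 ^ 2) - sigma * ln 1) with 0 by (rewrite ln_1; field).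
  rewrite exp_0. rewrite Ha2.
  replace (sigma * n ^ 2 / n) with (sigma * n) by (field; lra).
  replace (sigma * n ^ 2 / 1) with (sigma * n ^ 2) by field.
  nra.
Qed.
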